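(* In the stochastic opinion dynamics described below, for every agent $i$, almost surely $\psi_{i,t}=0$ for infinitely many $t$ and $\psi_{i,t}=1$ for infinitely many $t$.
   Context: Let $A=(a_{i,j})$ be a symmetric $n\times n$ matrix with nonnegative entries, the weighted adjacency matrix of an undirected graph $G$ on $\{1,\dots,n\}$ (self-loops allowed) that is connected and not bipartite; let $\deg(i)=\sum_j a_{i,j}$. Each agent $i$ has a bias parameter $\gamma_i>0$, and $\mathrm{diag}(\gamma_1,\dots,\gamma_n)\neq I$. Define $f(\mu,\gamma)=\frac{\gamma\mu}{1+(\gamma-1)\mu}$ for $\mu\in[0,1]$, and for $\beta\in[0,1]^n$ let $\mu_i(\beta)=\frac{1}{\deg(i)}\sum_j a_{i,j}\beta_j$. Dynamics: $\beta_i(1)\in(0,1)$ are given initial values. For each $t\ge1$, conditionally on the history $\mathcal{H}_t$ (all declarations up to time $t$), the declarations $\psi_{i,t+1}\in\{0,1\}$, $i=1,\dots,n$, are independent with $\mathbb{P}[\psi_{i,t+1}=1\mid\mathcal{H}_t]=f(\mu_i(\beta(t)),\gamma_i)$, and $\beta_i(t+1)=\frac{t}{t+1}\beta_i(t)+\frac{1}{t+1}\psi_{i,t+1}$. *)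

(* Defs.v *)
From HB Require Import structures.
From mathcomp Require Import all_boot all_order all_algebra.
From mathcomp Require Import all_classical all_reals all_analysis.
Set Implicit Arguments. Unset Strict Implicit. Unset Printing Implicit Defensive.
Import Order.TTheory GRing.Theory Num.Theory.
Local Open Scope ring_scope.

Section Defs.
Variable R : realType.
Variable n : nat.

Definition adj (A : 'M[R]_n) : rel 'I_n := fun i j => 0 < A i j.

Definition graph_connected (A : 'M[R]_n) : Prop :=
  forall i j : 'I_n, connect (adj A) i j.

(* bipartite: a 2-colouring such that every edge (self-loops included)
   joins vertices of different colours *)
Definition graph_bipartite (A : 'M[R]_n) : Prop :=
  exists c : 'I_n -> bool, forall i j, 0 < A i j -> c i != c j.

Definition deg (A : 'M[R]_n) (i : 'I_n) : R := \sum_j A i j.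

Definition mu (A : 'M[R]_n) (b : 'I_n -> R) (i : 'I_n) : R :=
  (deg A i)^-1 * \sum_j A i j * b j.

Definition fbias (m g : R) : R := g * m / (1 + (g - 1) * m).

(* Deterministic empirical averages along a declaration path x
   (x t i = psi_{i,t}, only t >= 2 used):
   beta_seq b1 x k = beta(k+1); beta(1) = b1,
   beta(k+2) = (k+1)/(k+2) beta(k+1) + 1/(k+2) psi_{k+2}. *)
Fixpoint beta_seq (b1 : 'I_n -> R) (x : nat -> 'I_n -> bool) (k : nat)
  : 'I_n -> R :=
  match k with
  | 0 => b1
  | k'.+1 => fun i => (k'.+1%:R / k'.+2%:R) * beta_seq b1 x k' i
                      + (k'.+2%:R)^-1 * (x k'.+2 i)%:R
  end.

(* probability that agents declare the values x (k+2) i at time k+2, given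
   the history encoded in x up to time k+1 *)
Definition step_prob (A : 'M[R]_n) (gamma : 'I_n -> R) (b1 : 'I_n -> R)
  (x : nat -> 'I_n -> bool) (k : nat) : R :=
  \prod_(i < n)
    (let p := fbias (mu A (beta_seq b1 x k) i) (gamma i) in
     if x k.+2 i then p else 1 - p).

End Defs.

(* Main.v *)
Require Import Defs.
From HB Require Import structures.
From mathcomp Require Import all_boot all_order all_algebra.
From mathcomp Require Import all_classical all_reals all_analysis.
From mathcomp Require Import ring lra.
Import Order.TTheory GRing.Theory Num.Theory.
Local Open Scope ring_scope.
Local Open Scope classical_set_scope.


Section Real.
Variable R : realType.

Lemma fbias_lo (g m a : R) : 0 < g -> 0 <= a -> a <= m -> m <= 1 - a ->
  g * a / (1 + g) ^+ 2 <= fbias m g /\ g * a / (1 + g) ^+ 2 <= 1 - fbias m g.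
Proof.
move=> g0 a0 am ma.
have D0 : 0 < 1 + (g - 1) * m.
  have [g1|g1] := lerP g 1.
    have : 0 <= (1 - g) * (1 - m) by apply: mulr_ge0; lra.
    nra.
  have : 0 <= (g - 1) * m by apply: mulr_ge0; lra.
  lra.
have D1 : 1 + (g - 1) * m <= 1 + g.
  have : 0 <= g * (1 - m) by apply: mulr_ge0; lra.
  have : 0 <= m by lra.
  nra.
have G0 : 0 < (1 + g) ^+ 2 by rewrite exprn_gt0 //; lra.
rewrite /fbias; split.
- rewrite ler_pdivrMr // mulrAC ler_pdivlMr //.
  have h1 : g * a * (1 + (g - 1) * m) <= g * m * (1 + (g - 1) * m).
    by apply: ler_wpM2r; [lra|apply: ler_wpM2l; lra].
  have h2 : g * m * (1 + (g - 1) * m) <= g * m * (1 + g) ^+ 2.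
    apply: ler_wpM2l; first by apply: mulr_ge0; lra.
    rewrite expr2; nra.
  lra.
- have -> : 1 - g * m / (1 + (g - 1) * m) = (1 - m) / (1 + (g - 1) * m).
    by field; rewrite gt_eqF.
  rewrite ler_pdivrMr // mulrAC ler_pdivlMr //.
  have h1 : g * a * (1 + (g - 1) * m) <= g * (1 - m) * (1 + (g - 1) * m).
    by apply: ler_wpM2r; [lra|apply: ler_wpM2l; lra].
  have h2 : g * (1 - m) * (1 + (g - 1) * m) <= (1 - m) * (1 + g) ^+ 2.
    rewrite [g * _]mulrC -mulrA; apply: ler_wpM2l; first lra.
    rewrite expr2; nra.
  lra.
Qed.

Lemma pow_bound (a : R) (K : nat) : 0 <= a <= 1 -> (1 - a) ^+ K * (1 + K%:R * a) <= 1.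
Proof.
move=> /andP[a0 a1]; elim: K => [|K IH]; first by rewrite expr0 mul0r addr0 mul1r.
rewrite exprS -natr1.
have h : 0 <= (1 - a) ^+ K by rewrite exprn_ge0 // subr_ge0.
have h2 : 0 <= (1 - a) ^+ K * ((K%:R + 1) * (a * a)).
  by apply: mulr_ge0 => //; apply: mulr_ge0; [rewrite addr_ge0 | nra].
have -> : (1 - a) * (1 - a) ^+ K * (1 + (K%:R + 1) * a) =
   (1 - a) ^+ K * (1 + K%:R * a) - (1 - a) ^+ K * ((K%:R + 1) * (a * a)) by ring.
lra.
Qed.


Lemma beta_bounds (n : nat) (b1 : 'I_n -> R) (lo : R) : 0 <= lo ->
  (forall j, lo <= b1 j /\ lo <= 1 - b1 j) ->
  forall x k j, lo / k.+1%:R <= beta_seq b1 x k j <= 1 - lo / k.+1%:R.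
Proof.
move=> lo0 hb x k j; elim: k => [|k IH].
  rewrite /= divr1; have [h1 h2] := hb j; apply/andP; split; lra.
move: IH => /andP[IH1 IH2] /=.
set r := beta_seq b1 x k j.
set e : R := (x k.+2 j)%:R.
have e01 : 0 <= e <= 1 by rewrite /e; case: (x k.+2 j); rewrite /= ?lexx ?ler01.
have u0 : 0 < k.+1%:R :> R by rewrite ltr0n.
have v0 : 0 < k.+2%:R :> R by rewrite ltr0n.
have vu : k.+2%:R = k.+1%:R + 1 :> R by rewrite -natr1.
have -> : k.+1%:R / k.+2%:R * r + k.+2%:R^-1 * e = (k.+1%:R * r + e) / k.+2%:R :> R.
  by field; rewrite gt_eqF.
have ur1 : lo <= k.+1%:R * r by rewrite mulrC -ler_pdivrMr.
have ur2 : k.+1%:R * r <= k.+1%:R - lo.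
  have : k.+1%:R * r <= k.+1%:R * (1 - lo / k.+1%:R) by rewrite ler_wpM2l // ltW.
  by rewrite mulrBr mulr1 mulrCA divff ?gt_eqF // mulr1.
apply/andP; split.
  by rewrite ler_pM2r ?invr_gt0 //; lra.
have -> : 1 - lo / k.+2%:R = (k.+2%:R - lo) / k.+2%:R :> R by field; rewrite gt_eqF.
rewrite ler_pM2r ?invr_gt0 //; lra.
Qed.

Lemma mu_bounds (n : nat) (A : 'M[R]_n) (b : 'I_n -> R) (i : 'I_n) (a : R) :
  0 < deg A i -> (forall j, 0 <= A i j) -> (forall j, a <= b j <= 1 - a) ->
  a <= mu A b i <= 1 - a.
Proof.
move=> d0 A0 hb; rewrite /mu.
have e1 : \sum_j A i j * a = deg A i * a by rewrite /deg big_distrl.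
have e2 : \sum_j A i j * (1 - a) = deg A i * (1 - a) by rewrite /deg big_distrl.
have s1 : \sum_j A i j * a <= \sum_j A i j * b j.
  by apply: ler_sum => j _; apply: ler_wpM2l => //; case/andP: (hb j).
have s2 : \sum_j A i j * b j <= \sum_j A i j * (1 - a).
  by apply: ler_sum => j _; apply: ler_wpM2l => //; case/andP: (hb j).
have di y : (deg A i)^-1 * (deg A i * y) = y by rewrite mulrA mulVf ?gt_eqF ?mul1r.
apply/andP; split.
  rewrite -{1}(di a) -e1; apply: ler_wpM2l => //.
  by rewrite invr_ge0 ltW.
rewrite -(di (1 - a)) -e2; apply: ler_wpM2l => //.
by rewrite invr_ge0 ltW.
Qed.


Lemma deg_pos (n : nat) (A : 'M[R]_n) : (forall i j, 0 <= A i j) ->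
  graph_connected A -> ~ graph_bipartite A -> forall i, 0 < deg A i.
Proof.
move=> A0 hc hb i.
have [u [v huv]] : exists u v, 0 < A u v.
  apply/not_existsP => hn; apply: hb; exists (fun _ => true) => x y hxy.
  by exfalso; apply: (hn x); exists y.
have [j hj] : exists j, 0 < A i j.
  move: (hc i u) => /connectP [[|y p]] /= hp hu.
    by exists v; rewrite -hu.
  by exists y; case/andP: hp.
rewrite /deg (bigD1 j) //=.
have : 0 <= \sum_(k | k != j) A i k by apply: sumr_ge0 => k _.
lra.
Qed.

End Real.


Section Meas.
Variables (R : realType) (d : measure_display) (T : measurableType d) (P : probability T R).

Definition pr (S : set T) : R := fine (P S).

Lemma prE S : measurable S -> P S = (pr S)%:E.
Proof.
move=> mS; rewrite /pr fineK // ge0_fin_numE ?measure_ge0 //.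
by apply: (le_lt_trans (probability_le1 P mS)); rewrite ltry.
Qed.

Lemma pr_ge0 S : 0 <= pr S.
Proof. by rewrite /pr fine_ge0 ?measure_ge0. Qed.

Lemma pr_le S S' : measurable S -> measurable S' -> S `<=` S' -> pr S <= pr S'.
Proof.
move=> mS mS' SS'; rewrite -lee_fin -!prE //.
by apply: le_measure => //; rewrite inE.
Qed.

Lemma m_forall_nat (Q : nat -> T -> Prop) :
  (forall k, measurable [set w | Q k w]) -> measurable [set w | forall k, Q k w].
Proof.
move=> hQ; have -> : [set w | forall k, Q k w] = \bigcap_k [set w | Q k w].
  by apply/seteqP; split => w /= h k; [move=> _; exact: h | exact: h].
by apply: bigcapT_measurable => k; exact: hQ.
Qed.

Lemma m_forall_seq (I : eqType) (r : seq I) (Q : I -> T -> Prop) :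
  (forall k, measurable [set w | Q k w]) ->
  measurable [set w | forall k, k \in r -> Q k w].
Proof.
move=> hQ; elim: r => [|a r IH].
  have -> : [set w | forall k, k \in [::] -> Q k w] = setT.
    by apply/seteqP; split => w //= _ k.
  exact: measurableT.
have -> : [set w | forall k, k \in a :: r -> Q k w] =
   [set w | Q a w] `&` [set w | forall k, k \in r -> Q k w].
  apply/seteqP; split => w /=.
    by move=> h; split; [apply: h; rewrite mem_head | move=> k kr; apply: h; rewrite in_cons kr orbT].
  by move=> [h1 h2] k; rewrite in_cons => /orP[/eqP->|]; [|apply: h2].
exact: measurableI.
Qed.

Lemma m_forall_fin (I : finType) (Q : I -> T -> Prop) :
  (forall k, measurable [set w | Q k w]) -> measurable [set w | forall k, Q k w].
Proof.
move=> hQ; have -> : [set w | forall k, Q k w] = [set w | forall k, k \in enum I -> Q k w].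
  by apply/seteqP; split => w /= h k; [move=> _; exact: h | apply: h; rewrite mem_enum].
exact: m_forall_seq.
Qed.

Lemma m_imp (b : bool) (Q : T -> Prop) :
  measurable [set w | Q w] -> measurable [set w | b -> Q w].
Proof.
case: b => h.
  by have -> : [set w | true -> Q w] = [set w | Q w] by apply/seteqP; split => w /=; auto.
have -> : [set w | false -> Q w] = setT by apply/seteqP; split => w //=.
exact: measurableT.
Qed.

Lemma m_eqb (f : T -> bool) (b : bool) :
  measurable [set w | f w] -> measurable [set w | f w = b].
Proof.
case: b => h.
  by have -> : [set w | f w = true] = [set w | f w] by apply/seteqP; split => w /=.
have -> : [set w | f w = false] = ~` [set w | f w].
  by apply/seteqP; split => w /=; case: (f w).
exact: measurableC.
Qed.


Lemma in_bigsetU (I : eqType) (r : seq I) (F : I -> set T) w :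
  (\big[setU/set0]_(i <- r) F i) w -> exists2 i, i \in r & F i w.
Proof.
elim: r => [|a r IH]; first by rewrite big_nil.
rewrite big_cons => -[h|/IH [i ir h]]; first by exists a; rewrite ?mem_head.
by exists i; rewrite // in_cons ir orbT.
Qed.

Lemma mem_bigsetU (I : eqType) (r : seq I) (F : I -> set T) w i :
  i \in r -> F i w -> (\big[setU/set0]_(i <- r) F i) w.
Proof.
elim: r => [//|a r IH]; rewrite in_cons big_cons => /orP[/eqP <- h|ir h].
  by left.
by right; apply: IH.
Qed.

Lemma measure_big_disj (I : eqType) (r : seq I) (F : I -> set T) : uniq r ->
  (forall i, measurable (F i)) -> (forall i j, i != j -> F i `&` F j = set0) ->
  P (\big[setU/set0]_(i <- r) F i) = (\sum_(i <- r) P (F i))%E.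
Proof.
move=> + mF dF; elim: r => [|a r IH]; first by rewrite !big_nil measure0.
move=> /= /andP[ar ur]; rewrite !big_cons measureU //.
- by congr (_ + _)%E; apply: IH.
- by apply: bigsetU_measurable => i _; exact: mF.
- apply/seteqP; split => w //= [Faw /in_bigsetU [i ri Fiw]].
  have ai : a != i by apply: contraNneq ar => ->.
  by have := dF a i ai; move/seteqP => [+ _] => /(_ w (conj Faw Fiw)).
Qed.

End Meas.
Arguments pr {R d T} P S.


Section Core.
Variables (R : realType) (n : nat) (A : 'M[R]_n) (gamma : 'I_n -> R) (b1 : 'I_n -> R).
Variables (d : measure_display) (T : measurableType d) (P : probability T R).
Variable psi : nat -> 'I_n -> T -> bool.
Hypothesis Hm : forall t i, measurable [set w | psi t i w].
Hypothesis Hlaw : forall (t : nat) (x : nat -> 'I_n -> bool),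
      P [set w | forall k i, (k < t)%N -> psi k.+2 i w = x k.+2 i]
      = (\prod_(k < t) step_prob A gamma b1 x k)%:E.

Definition Cyl t (x : nat -> 'I_n -> bool) :=
  [set w | forall k i, (k < t)%N -> psi k.+2 i w = x k.+2 i].

Lemma mCyl t x : measurable (Cyl t x).
Proof.
apply: m_forall_nat => k; apply: m_forall_fin => j; apply: m_imp; exact: m_eqb.
Qed.

Lemma prCyl t x : pr P (Cyl t x) = \prod_(k < t) step_prob A gamma b1 x k.
Proof. by have := Hlaw t x; rewrite -/(Cyl t x) prE; [case | exact: mCyl]. Qed.

Definition upd (x : nat -> 'I_n -> bool) t (y : {ffun 'I_n -> bool}) :=
  fun s j => if s == t.+2 then y j else x s j.

Lemma beta_ext x x' k : (forall k' j, (k' < k)%N -> x k'.+2 j = x' k'.+2 j) ->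
  beta_seq b1 x k = beta_seq b1 x' k.
Proof.
elim: k => [//|k IH] h /=; apply: funext => j.
rewrite IH ?h // => k' j' hk; apply: h; exact: ltnW.
Qed.

Definition Fst x t j (v : bool) : R :=
  let p := fbias (mu A (beta_seq b1 x t) j) (gamma j) in if v then p else 1 - p.

Lemma step_upd_lt x t y k : (k < t)%N -> step_prob A gamma b1 (upd x t y) k = step_prob A gamma b1 x k.
Proof.
move=> kt; rewrite /step_prob (@beta_ext (upd x t y) x k).
  by apply: eq_bigr => j _; rewrite /upd !eqSS (ltn_eqF kt).
by move=> k' j hk; rewrite /upd !eqSS (ltn_eqF (ltn_trans hk kt)).
Qed.

Lemma step_upd_eq x t y : step_prob A gamma b1 (upd x t y) t = \prod_j Fst x t j (y j).
Proof.
rewrite /step_prob (@beta_ext (upd x t y) x t).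
  by apply: eq_bigr => j _; rewrite /upd eqxx.
by move=> k' j hk; rewrite /upd !eqSS (ltn_eqF hk).
Qed.

Lemma prCyl_upd x t y : pr P (Cyl t.+1 (upd x t y)) = pr P (Cyl t x) * \prod_j Fst x t j (y j).
Proof.
rewrite !prCyl big_ord_recr /= step_upd_eq; congr (_ * _).
by apply: eq_bigr => k _; rewrite step_upd_lt.
Qed.


Lemma split_upd t x S : measurable S ->
  pr P (Cyl t x `&` S) =
  \sum_(y : {ffun 'I_n -> bool}) pr P (Cyl t.+1 (upd x t y) `&` S).
Proof.
move=> mS.
have eqset : Cyl t x `&` S =
    \big[setU/set0]_(y <- index_enum {ffun 'I_n -> bool}) (Cyl t.+1 (upd x t y) `&` S).
  apply/seteqP; split => w.
    move=> [hc hs]; apply: (@mem_bigsetU _ _ _ _ _ _ [ffun j => psi t.+2 j w]).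
      by rewrite mem_index_enum.
    split => // k j hk; rewrite /upd; case: eqP => [[->]|ne]; first by rewrite ffunE.
    apply: hc; move: hk; rewrite ltnS leq_eqVlt => /orP[/eqP e|//].
    by exfalso; apply: ne; rewrite e.
  move/in_bigsetU => [y _ [hc hs]]; split => // k j hk.
  have := hc k j (ltnW hk); rewrite /upd !eqSS (ltn_eqF hk) //.
have mF y : measurable (Cyl t.+1 (upd x t y) `&` S) by apply: measurableI => //; exact: mCyl.
have dF : forall y y', y != y' -> (Cyl t.+1 (upd x t y) `&` S) `&` (Cyl t.+1 (upd x t y') `&` S) = set0.
  move=> y y' ne.
  apply/seteqP; split => w // [[h1 _] [h2 _]]; apply: (negP ne); apply/eqP/ffunP => j.
  by have := h1 t j (ltnSn t); have := h2 t j (ltnSn t); rewrite /upd eqxx => -> ->.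
have E := @measure_big_disj _ _ _ P _ _ _ (index_enum_uniq _) mF dF.
rewrite -eqset in E.
have E2 : ((\sum_(y : {ffun 'I_n -> bool}) pr P (Cyl t.+1 (upd x t y) `&` S))%:E =
   \sum_(y <- index_enum {ffun 'I_n -> bool}) P (Cyl t.+1 (upd x t y) `&` S))%E.
  by rewrite -sumEFin; apply: eq_bigr => y _; rewrite prE.
rewrite -E2 prE in E; last by apply: measurableI => //; exact: mCyl.
by case: E.
Qed.


Section Claim.
Variables (i : 'I_n) (b : bool) (N : nat) (c : R).
Hypothesis c0 : 0 <= c.
Hypothesis c1 : c <= 1.
Hypothesis Hb : forall x t, Fst x t i b <= 1 - c / t.+1%:R.

Definition G t m := [set w | forall s, (t <= s)%N -> (s < t + m)%N -> (N <= s)%N -> psi s.+2 i w = b].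

Lemma mG t m : measurable (G t m).
Proof.
apply: m_forall_nat => s; apply: m_imp; apply: m_imp; apply: m_imp; exact: m_eqb.
Qed.

Definition fac s : R := if (N <= s)%N then 1 - c / s.+1%:R else 1.

Lemma fac_ge0 s : 0 <= fac s.
Proof.
rewrite /fac; case: ifP => // _; rewrite subr_ge0 ler_pdivrMr ?ltr0n // mul1r.
by apply: (le_trans c1); rewrite ler1n.
Qed.

Lemma pr0 : pr P set0 = 0.
Proof. by rewrite /pr measure0. Qed.

Lemma claim m : forall t x, pr P (Cyl t x `&` G t m) <=
  pr P (Cyl t x) * \prod_(0 <= s < m) fac (t + s).
Proof.
elim: m => [|m IH] t x.
  rewrite big_geq // mulr1; apply: pr_le; [apply: measurableI; [exact: mCyl|exact: mG]|exact: mCyl|].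
  exact: subIsetl.
set Pi := \prod_(0 <= s < m) fac (t.+1 + s).
have Pi0 : 0 <= Pi by apply: prodr_ge0 => s _; exact: fac_ge0.
pose F2 j (v : bool) := if [&& j == i, (N <= t)%N & v != b] then 0 else Fst x t j v.
have hy : forall y : {ffun 'I_n -> bool},
    pr P (Cyl t.+1 (upd x t y) `&` G t m.+1) <= pr P (Cyl t x) * Pi * \prod_j F2 j (y j).
  move=> y; have [bad|good] := boolP ((N <= t)%N && (y i != b)).
    have -> : \prod_j F2 j (y j) = 0.
      by rewrite (bigD1 i) //= /F2 eqxx bad /= mul0r.
    rewrite mulr0 -pr0; apply: pr_le => //.
      by apply: measurableI; [exact: mCyl|exact: mG].
    move=> w [h1 h2]; move: bad => /andP[Nt /negP]; apply.
    have := h1 t i (ltnSn t); rewrite /upd eqxx => <-.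
    by apply/eqP; apply: h2 => //; rewrite addnS ltnS leq_addr.
  have -> : \prod_j F2 j (y j) = \prod_j Fst x t j (y j).
    apply: eq_bigr => j _; rewrite /F2; case: eqP => // ->.
    by rewrite (negbTE good).
  apply: (le_trans (y := pr P (Cyl t.+1 (upd x t y) `&` G t.+1 m))).
    apply: pr_le; try (by apply: measurableI; [exact: mCyl|exact: mG]).
    move=> w [h1 h2]; split => // s ts sm Ns; apply: h2 => //; first exact: ltnW.
    by rewrite addnS -addSn.
  apply: (le_trans (IH _ _)); rewrite prCyl_upd -/Pi.
  by rewrite -!mulrA [Pi * _]mulrC.
rewrite split_upd; last exact: mG.
apply: (le_trans (ler_sum _ (fun y _ => hy y))).
rewrite -mulr_sumr -bigA_distr_bigA.
have hX : \prod_j \sum_(v : bool) F2 j v = (if (N <= t)%N then Fst x t i b else 1).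
  rewrite (bigD1 i) //= [X in _ * X]big1 ?mulr1; last first.
    move=> j ji; rewrite big_bool /F2 (negbTE ji) /= /Fst /=; ring.
  rewrite big_bool /F2 eqxx /=; case: (N <= t)%N => /=; last by rewrite /Fst /=; ring.
  by case: b => /=; rewrite ?addr0 ?add0r.
rewrite hX big_nat_recl // addn0.
have -> : \prod_(0 <= s < m) fac (t + s.+1) = Pi.
  by apply: eq_bigr => s _; rewrite addnS -addSn.
have hf : (if (N <= t)%N then Fst x t i b else 1) <= fac t.
  by rewrite /fac; case: ifP => // _; exact: Hb.
rewrite -mulrA [Pi * _]mulrC; apply: ler_wpM2l; first exact: pr_ge0.
by apply: ler_wpM2r.
Qed.


Lemma tele (N0 k : nat) :
  \prod_(0 <= s < N0 + k) (if (N0 <= s)%N then s.+1%:R / s.+2%:R else 1 : R) =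
  N0.+1%:R / (N0 + k).+1%:R.
Proof.
elim: k => [|k IH].
  rewrite addn0 big1_seq ?divff // ?pnatr_eq0 // => s; rewrite mem_index_iota => /andP[_ sN].
  by move: sN => /andP[_ sN]; rewrite leqNgt sN.
rewrite addnS big_nat_recr //= IH leq_addr.
have h1 : (N0 + k).+1%:R != 0 :> R by rewrite pnatr_eq0.
have h2 : (N0 + k).+2%:R != 0 :> R by rewrite pnatr_eq0.
by field; apply/andP; split.
Qed.

Lemma fac_pow (K s : nat) : 1 <= K%:R * c ->
  (1 - c / s.+1%:R) ^+ K <= s.+1%:R / s.+2%:R.
Proof.
move=> Kc.
set u : R := s.+1%:R.
have u1 : 1 <= u by rewrite /u ler1n.
have -> : s.+2%:R = u + 1 :> R by rewrite /u -natr1.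
set a := c / u.
have a0 : 0 <= a by rewrite /a divr_ge0 // ler0n.
have au : a * u = c by rewrite /a mulrVK // unitfE /u pnatr_eq0.
have a1 : a <= 1.
  rewrite /a ler_pdivrMr ?mul1r; first exact: le_trans c1 u1.
  exact: lt_le_trans ltr01 u1.
clearbody a u.
have hp := @pow_bound R a K (introT andP (conj a0 a1)).
set X := (1 - a) ^+ K in hp *.
have X0 : 0 <= X by rewrite /X exprn_ge0 // subr_ge0.
rewrite ler_pdivlMr; last lra.
have : 0 <= X * (K%:R * a * u - 1).
  apply: mulr_ge0 => //; rewrite subr_ge0 -mulrA au //.
have : u * (X * (1 + K%:R * a)) <= u * 1 by apply: ler_wpM2l; lra.
nra.
Qed.

Lemma bad_null (K : nat) : 1 <= K%:R * c ->
  P [set w | forall t, (N <= t)%N -> psi t i w = b] = 0%E.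
Proof.
move=> Kc.
set B := [set w | forall t, (N <= t)%N -> psi t i w = b].
have mB : measurable B.
  by apply: m_forall_nat => t; apply: m_imp; exact: m_eqb.
pose x0 : nat -> 'I_n -> bool := fun _ _ => true.
have hm : forall m, pr P B <= \prod_(0 <= s < m) fac s.
  move=> m; apply: (le_trans (y := pr P (Cyl 0 x0 `&` G 0 m))).
    apply: pr_le => //; first by apply: measurableI; [exact: mCyl|exact: mG].
    move=> w Bw; split => // s _ _ Ns; apply: Bw.
    by apply: (leq_trans Ns); rewrite leqW.
  apply: (le_trans (claim m 0 x0)); rewrite prCyl big_ord0 mul1r.
  by under eq_bigr do rewrite add0n.
set r := pr P B.
have r0 : 0 <= r by exact: pr_ge0.
have hk : forall k, r ^+ K <= N.+1%:R / (N + k).+1%:R.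
  move=> k; rewrite -tele.
  apply: (le_trans (y := (\prod_(0 <= s < N + k) fac s) ^+ K)).
    by rewrite lerXn2r // ?nnegrE // ?hm //; apply: prodr_ge0 => s _; exact: fac_ge0.
  rewrite -prodrXl; apply: ler_prod => s _; rewrite exprn_ge0 ?fac_ge0 //=.
  rewrite /fac; case: ifP => _; last by rewrite expr1n.
  exact: fac_pow.
have rK0 : r ^+ K = 0.
  apply/eqP; rewrite eq_le exprn_ge0 // andbT; apply/negP => /negP; rewrite -ltNge => rpos.
  set z := N.+1%:R / r ^+ K.
  have z0 : 0 <= z by rewrite /z divr_ge0 // ltW.
  have := Num.Theory.archi_boundP z0; set k := Num.bound z => kz.
  have := hk k; rewrite ler_pdivlMr ?ltr0n // => h.
  have : z < (N + k).+1%:R.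
    apply: (lt_le_trans kz); rewrite ler_nat -addSn leq_addl //.
  rewrite /z ltr_pdivrMr // => h2.
  by rewrite mulrC in h2; have := lt_le_trans h2 h; rewrite ltxx.
have r00 : r = 0 by move: rK0 => /eqP; rewrite expf_eq0 => /andP[_ /eqP].
by rewrite prE // -/r r00.
Qed.

End Claim.

End Core.


Lemma lo_exists (R : realType) (n : nat) (b1 : 'I_n -> R) : (forall i, 0 < b1 i < 1) ->
  exists lo, 0 < lo /\ forall j, lo <= b1 j /\ lo <= 1 - b1 j.
Proof.
move=> hb; exists (\prod_j (b1 j * (1 - b1 j))).
have F0 j : 0 < b1 j * (1 - b1 j) by case/andP: (hb j) => h1 h2; apply: mulr_gt0; lra.
have F1 j : b1 j * (1 - b1 j) <= b1 j /\ b1 j * (1 - b1 j) <= 1 - b1 j.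
  case/andP: (hb j) => h1 h2; split; nra.
split; first by apply: prodr_gt0 => j _.
move=> j; rewrite (bigD1 j) //=.
have r01 : 0 <= \prod_(k | k != j) (b1 k * (1 - b1 k)) <= 1.
  apply/andP; split; first by apply: prodr_ge0 => k _; exact: ltW.
  apply: prodr_ile1 => k _; apply/andP; split; first exact: ltW.
  case: (F1 k) => h1 _; case/andP: (hb k) => _ h3; lra.
case/andP: r01 => r0 r1.
have hj := F0 j; case: (F1 j) => h1 h2.
have : b1 j * (1 - b1 j) * \prod_(k | k != j) (b1 k * (1 - b1 k)) <= b1 j * (1 - b1 j).
  by rewrite -{2}[b1 j * _]mulr1; apply: ler_wpM2l => //; exact: ltW.
move=> h; split; lra.
Qed.

Theorem lemma2 (R : realType) (n : nat) (A : 'M[R]_n)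
  (gamma : 'I_n -> R) (b1 : 'I_n -> R)
  (d : measure_display) (T : measurableType d) (P : probability T R)
  (psi : nat -> 'I_n -> T -> bool) :
  (forall i j, A i j = A j i) ->
  (forall i j, 0 <= A i j) ->
  graph_connected A ->
  ~ graph_bipartite A ->
  (forall i, 0 < gamma i) ->
  (exists i, gamma i != 1) ->
  (forall i, 0 < b1 i < 1) ->
  (forall t i, measurable [set w | psi t i w]) ->
  (forall (t : nat) (x : nat -> 'I_n -> bool),
      P [set w | forall k i, (k < t)%N -> psi k.+2 i w = x k.+2 i]
      = (\prod_(k < t) step_prob A gamma b1 x k)%:E) ->
  forall i : 'I_n,
    {ae P, forall w,
        (forall N, exists2 t, (N <= t)%N & psi t i w = false) /\
        (forall N, exists2 t, (N <= t)%N & psi t i w = true)}.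
Proof.
move=> _ A0 hc hbip g0 _ hb1 Hm Hlaw i.
have [lo [lo0 hlo]] := @lo_exists _ _ _ hb1.
have dpos := @deg_pos _ _ A A0 hc hbip.
set g := gamma i.
set c := lo * g / (1 + g) ^+ 2.
have G0 : 0 < (1 + g) ^+ 2 by rewrite exprn_gt0 //; have := g0 i; rewrite -/g; lra.
have c0 : 0 < c by rewrite /c divr_gt0 // mulr_gt0 // g0.
have c1 : c <= 1.
  rewrite /c ler_pdivrMr // mul1r.
  have gi := g0 i; rewrite -/g in gi.
  have [h1 _] := hlo i; case/andP: (hb1 i) => _ h3.
  have : lo * g <= g by rewrite -{2}[g]mul1r; apply: ler_wpM2r; lra.
  rewrite expr2; nra.
have Hb : forall (b : bool) x t, @Fst _ _ A gamma b1 x t i b <= 1 - c / t.+1%:R.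
  move=> b x t.
  set a := lo / t.+1%:R.
  have a0 : 0 <= a by rewrite /a divr_ge0 // ?ler0n // ltW.
  have hbeta j : a <= beta_seq b1 x t j <= 1 - a by exact: (@beta_bounds _ _ b1 lo (ltW lo0) hlo x t j).
  have := @mu_bounds _ _ A _ i a (dpos i) (A0 i) hbeta; case/andP => m1 m2.
  have [f1 f2] := @fbias_lo _ _ _ _ (g0 i) a0 m1 m2.
  have ce : c / t.+1%:R = g * a / (1 + g) ^+ 2.
    have t0 : 0 <= t%:R :> R := ler0n _ _.
    have gi := g0 i; rewrite -/g in gi.
    rewrite /c /a; field; apply/andP; split; apply/eqP; lra.
  rewrite /Fst /=; rewrite -/g in f1 f2 *; case: b => /=; rewrite ce; lra.
have K0 : 0 <= c^-1 by rewrite invr_ge0 ltW.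
have := Num.Theory.archi_boundP K0; set K := Num.bound _ => hK.
have Kc : 1 <= K%:R * c.
  have : c^-1 * c <= K%:R * c by apply: ler_wpM2r; [exact: ltW | exact: ltW].
  by rewrite mulVf ?gt_eqF.
have null : forall (b : bool) (N : nat),
    P [set w | forall t, (N <= t)%N -> psi t i w = b] = 0%E.
  move=> b N; exact: (@bad_null _ _ A gamma b1 _ _ P psi Hm Hlaw i b N c (ltW c0) c1 (Hb b) K Kc).
have nb : forall (b : bool) (N : nat),
    P.-negligible [set w | forall t, (N <= t)%N -> psi t i w = b].
  move=> b N; exists [set w | forall t, (N <= t)%N -> psi t i w = b]; split => //.
  by apply: m_forall_nat => t; apply: m_imp; exact: m_eqb.
have nU := negligible_bigcup (fun N => negligibleU (nb true N) (nb false N)).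
apply: (negligibleS _ nU) => w /= hw.
move/not_andP: hw => [h|h].
  move/existsNP: h => [N hN]; exists N => //; left => t Nt.
  by case E: (psi t i w) => //; exfalso; apply: hN; exists t.
move/existsNP: h => [N hN]; exists N => //; right => t Nt.
by case E: (psi t i w) => //; exfalso; apply: hN; exists t.
Qed.
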